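(* Consider the two-layer multi-item order fulfillment problem described in the context with time-invariant variable costs, any $K\ge 1$, and any given fixed costs $f_0\ge0$, $f_1,\dots,f_K>0$. Then every online fulfillment policy $\mathrm{ALG}$ (deterministic or randomized) satisfies \[\mathfrak R_{\mathrm{inv}}(\mathrm{ALG})\ge\frac{f_0+\sum_{k\in[K]}f_k}{\min_{k\in[K]}f_k}.\]
   Context: Problem. $n$ items, $K$ FDCs indexed $k\in[K]$, an RDC indexed $k=0$ with unlimited inventory. FDC $k$ initially holds $I_{k,0}^i\ge0$ units of item $i$, never replenished. In periods $t=1,\dots,T$ an order $\boldsymbol S_t=(S_t^i)_i$ of nonnegative integers arrives; the policy must immediately and irrevocably choose $m_{k,t}^i\ge0$ with $\sum_{k=0}^Km_{k,t}^i=S_t^i$ and $m_{k,t}^i\le I_{k,t-1}^i$ ($k\in[K]$), $I_{k,t}^i=I_{k,0}^i-\sum_{\tau\le t}m_{k,\tau}^i$. Period cost $\sum_{k=0}^K[f_k\mathbb{I}(\sum_im_{k,t}^i>0)+\sum_ic_{k,t}^im_{k,t}^i]$; total cost is the sum. An online policy (possibly randomized) decides in period $t$ using only fixed costs, initial inventories and orders/variable costs up to $t$. $\mathrm{ALG}(I)$: (expected) total cost on instance $I$; $\mathrm{OPT}(I)$: offline optimal total cost. $\mathfrak R_{\mathrm{inv}}(\mathrm{ALG})$ is the supremum of $\mathrm{ALG}(I)/\mathrm{OPT}(I)$ over all $n,T$, initial inventories, nonnegative time-invariant variable costs $c_{k,t}^i=c_k^i$ and order sequences. *)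

(* Defs.v *)
From HB Require Import structures.
From mathcomp Require Import all_boot all_order all_algebra.
From mathcomp Require Import all_classical all_reals all_analysis.
Set Implicit Arguments. Unset Strict Implicit. Unset Printing Implicit Defensive.
Import Order.TTheory GRing.Theory Num.Theory.
Local Open Scope ring_scope.
Local Open Scope classical_set_scope.

(* Sites are indexed by 'I_K.+1: ord0 is the RDC (index 0), and
   [lift ord0 k] (k : 'I_K) is FDC number k+1.  Items are 'I_n.  An allocation in one period is
   m : 'I_K.+1 -> 'I_n -> nat  (m site item).  A fulfillment plan over
   T periods is M : nat -> 'I_K.+1 -> 'I_n -> nat (period t = 0..T-1). *)

(* Feasibility of a plan for initial FDC inventories I0 and orders S
   (S = [:: S_1; ...; S_T]). *)
Definition feasible_plan (K n : nat) (I0 : 'I_K -> 'I_n -> nat)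
    (S : seq ('I_n -> nat)) (M : nat -> 'I_K.+1 -> 'I_n -> nat) : Prop :=
  forall t, (t < size S)%N ->
    (forall i : 'I_n, (\sum_(k < K.+1) M t k i)%N = nth (fun=> 0%N) S t i) /\
    (forall (k : 'I_K) (i : 'I_n),
        (M t (lift ord0 k) i <= I0 k i - \sum_(s < t) M s (lift ord0 k) i)%N).

Definition plan_cost (R : realType) (K n : nat) (f : 'I_K.+1 -> R)
    (c : 'I_K.+1 -> 'I_n -> R) (T : nat) (M : nat -> 'I_K.+1 -> 'I_n -> nat) : R :=
  \sum_(t < T) \sum_(k < K.+1)
     (f k * (if (0 < \sum_(i < n) M t k i)%N then 1 else 0)
      + \sum_(i < n) c k i * (M t k i)%:R).

Definition OPT (R : realType) (K n : nat) (f : 'I_K.+1 -> R)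
    (I0 : 'I_K -> 'I_n -> nat) (c : 'I_K.+1 -> 'I_n -> R)
    (S : seq ('I_n -> nat)) : R :=
  inf [set plan_cost f c (size S) M | M in [set M | feasible_plan I0 S M]].

(* A deterministic online policy: in each period it sees the number of items,
   the initial FDC inventories, the (time-invariant) variable costs and the
   orders received so far [:: S_1; ...; S_t], and outputs the allocation of
   period t.  (Fixed costs are fixed parameters, hence implicitly known.) *)
Definition policy (R : realType) (K : nat) :=
  forall n : nat, ('I_K -> 'I_n -> nat) -> ('I_K.+1 -> 'I_n -> R) ->
    seq ('I_n -> nat) -> 'I_K.+1 -> 'I_n -> nat.

Definition run (R : realType) (K : nat) (pol : policy R K) (n : nat)
    (I0 : 'I_K -> 'I_n -> nat) (c : 'I_K.+1 -> 'I_n -> R)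
    (S : seq ('I_n -> nat)) : nat -> 'I_K.+1 -> 'I_n -> nat :=
  fun t => pol n I0 c (take t.+1 S).

(* Expected cost of a randomized policy (a family of deterministic policies
   indexed by a random seed w drawn from the probability P). *)
Definition ALG (R : realType) (K : nat) (f : 'I_K.+1 -> R)
    (d : measure_display) (Omega : measurableType d) (P : probability Omega R)
    (pol : Omega -> policy R K) (n : nat) (I0 : 'I_K -> 'I_n -> nat)
    (c : 'I_K.+1 -> 'I_n -> R) (S : seq ('I_n -> nat)) : \bar R :=
  (\int[P]_w (plan_cost f c (size S) (run (pol w) I0 c S))%:E)%E.

(* Main.v *)
Require Import Defs.
From HB Require Import structures.
From mathcomp Require Import all_boot all_order all_algebra.
From mathcomp Require Import all_classical all_reals all_analysis.
Import Order.TTheory GRing.Theory Num.Theory.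
Local Open Scope ring_scope.
Local Open Scope classical_set_scope.
From mathcomp Require Import zify ring lra.
Set Implicit Arguments. Unset Strict Implicit. Unset Printing Implicit Defensive.

Definition Item (K T : nat) := option ('I_T * 'I_K.+1)%type.
Definition nI (K T : nat) := #|{: Item K T}|.
Definition dec (K T : nat) (i : 'I_(nI K T)) : Item K T := enum_val i.
Definition enc (K T : nat) (x : Item K T) : 'I_(nI K T) := enum_rank x.
Lemma encK K T (x : Item K T) : dec (enc x) = x.
Proof. by rewrite /dec /enc enum_rankK. Qed.

Definition cI (R : realType) (K T : nat) (Fs : R) (k : 'I_K.+1) (i : 'I_(nI K T)) : R :=
  if k == ord0 then
    (match dec i with None => Fs | Some (_, j) => if j == ord0 then 0 else Fs end)
  else 0.

Definition I0I (K T : nat) (kst : 'I_K) (k : 'I_K) (i : 'I_(nI K T)) : nat :=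
  match dec i with
  | None => if k == kst then T else 0%N
  | Some (_, j) => if (k == kst) || (j == lift ord0 k) then T else 0%N
  end.

Definition ordS (K T : nat) (kst : 'I_K) (bs : seq bool) (u : nat) (i : 'I_(nI K T)) : nat :=
  match dec i with
  | None => 1%N
  | Some (s, j) => if j == lift ord0 kst then 0%N else
      if val s == u then T else if (val s < u)%N && nth false bs s then 1%N else 0%N
  end.

Definition typ (K T : nat) (j : 'I_K.+1) (i : 'I_(nI K T)) : bool :=
  if dec i is Some (_, j') then j' == j else false.

Definition Dj (K T : nat) (m : 'I_K.+1 -> 'I_(nI K T) -> nat) (j : 'I_K.+1) : bool :=
  ((\sum_(i < nI K T) m j i)%N == 0%N) && [forall i, typ j i ==> (m ord0 i == 0%N)].

Definition pcq (R : realType) (K n : nat) (f : 'I_K.+1 -> R) (c : 'I_K.+1 -> 'I_n -> R)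
  (m : 'I_K.+1 -> 'I_n -> nat) : R :=
  \sum_(k < K.+1) (f k * (if (0 < \sum_(i < n) m k i)%N then 1 else 0)
      + \sum_(i < n) c k i * (m k i)%:R).

Lemma plan_costE (R : realType) (K n : nat) (f : 'I_K.+1 -> R) (c : 'I_K.+1 -> 'I_n -> R) (T' : nat) M :
  plan_cost f c T' M = \sum_(t < T') pcq f c (M t) :> R.
Proof. by []. Qed.

Lemma feas_zero (K T : nat) (kst : 'I_K) S M t k i :
  feasible_plan (I0I kst) S M -> (t < size S)%N -> I0I (T:=T) kst k i = 0%N ->
  M t (lift ord0 k) i = 0%N.
Proof.
move=> /(_ t) H /H [_ /(_ k i)]; move=> h hz; move: h; rewrite hz sub0n; lia.
Qed.

Lemma sum_pos n (F : 'I_n -> nat) i : (0 < F i)%N -> (0 < \sum_(j < n) F j)%N.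
Proof. by move=> h; rewrite (bigD1 i) //= addn_gt0 h. Qed.

Lemma feas_demand (K T : nat) (kst : 'I_K) bs M t i :
  feasible_plan (I0I kst) (mkseq (ordS kst bs) T) M -> (t < T)%N ->
  (\sum_(k < K.+1) M t k i)%N = ordS (T:=T) kst bs t i.
Proof.
move=> /(_ t); rewrite size_mkseq => H /[dup] ht /H [-> _].
by rewrite nth_mkseq.
Qed.

Lemma feas_stock (K T : nat) (kst : 'I_K) bs M t k i :
  feasible_plan (I0I kst) (mkseq (ordS kst bs) T) M -> (t < T)%N ->
  (M t (lift ord0 k) i <= I0I (T:=T) kst k i - \sum_(s < t) M s (lift ord0 k) i)%N.
Proof.
move=> /(_ t); rewrite size_mkseq => H /H [_ ->] //.
Qed.

Lemma feas_zero' (K T : nat) (kst : 'I_K) bs M t k i :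
  feasible_plan (I0I kst) (mkseq (ordS kst bs) T) M -> (t < T)%N ->
  I0I (T:=T) kst k i = 0%N -> M t (lift ord0 k) i = 0%N.
Proof.
move=> hf ht hz; have := feas_stock k i hf ht; rewrite hz sub0n; lia.
Qed.

Lemma cI_ge0 (R : realType) K T (Fs : R) k (i : 'I_(nI K T)) : 0 <= Fs -> 0 <= cI Fs k i.
Proof.
rewrite /cI => h; case: (k == ord0) => //; case: (dec i) => [[s j]|] //.
by case: (j == ord0).
Qed.

Lemma B1 (R : realType) K T (f : 'I_K.+1 -> R) (kst : 'I_K) bs M t :
  (forall k, 0 <= f k) ->
  feasible_plan (I0I kst) (mkseq (ordS kst bs) T) M -> (t < T)%N ->
  \sum_(k < K.+1) f k * (if (k != lift ord0 kst) && Dj (M t) k then 0 else 1)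
    <= pcq f (cI (T:=T) (\sum_(k < K.+1) f k)) (M t).
Proof.
move=> hf0 hfe ht.
set Fs := \sum_(k < K.+1) f k.
have hFs : 0 <= Fs by apply: sumr_ge0 => k _; exact: hf0.
set m := M t.
have hterm : forall k, 0 <= f k * (if (0 < \sum_(i < nI K T) m k i)%N then 1 else 0)
      + \sum_(i < nI K T) cI Fs k i * (m k i)%:R.
  move=> k; apply: addr_ge0; first by apply: mulr_ge0 => //; case: ifP.
  by apply: sumr_ge0 => i _; apply: mulr_ge0 => //; exact: cI_ge0.
have hLe : \sum_(k < K.+1) f k * (if (k != lift ord0 kst) && Dj m k then 0 else 1) <= Fs.
  by apply: ler_sum => k _; case: ifP; rewrite ?mulr0 ?mulr1.
case: (boolP [exists i, (cI Fs ord0 i == Fs) && (0 < m ord0 i)%N]).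
  move/existsP => [i /andP [/eqP hc hm]].
  apply: (le_trans hLe).
  rewrite /pcq (bigD1 ord0) //= -/m.
  apply: (@le_trans _ _ (f ord0 * (if (0 < \sum_(i0 < nI K T) m ord0 i0)%N then 1 else 0)
      + \sum_(i0 < nI K T) cI Fs ord0 i0 * (m ord0 i0)%:R)); last first.
    by rewrite lerDl; apply: sumr_ge0 => k _; exact: hterm.
  apply: (@le_trans _ _ (\sum_(i0 < nI K T) cI Fs ord0 i0 * (m ord0 i0)%:R)); last first.
    by rewrite lerDr; apply: mulr_ge0 => //; case: ifP.
  rewrite (bigD1 i) //= hc.
  apply: (@le_trans _ _ (Fs * (m ord0 i)%:R)); last first.
    by rewrite lerDl; apply: sumr_ge0 => j _; apply: mulr_ge0 => //; exact: cI_ge0.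
  by rewrite -{1}(mulr1 Fs) ler_wpM2l // ler1n.
rewrite negb_exists => /forallP hno.
have hno' : forall i, cI Fs ord0 i = Fs -> m ord0 i = 0%N.
  by move=> i hc; move: (hno i); rewrite hc eqxx /=; lia.
rewrite /pcq -/m; apply: ler_sum => k _.
suff hu : ((k != lift ord0 kst) && Dj m k) || (0 < \sum_(i < nI K T) m k i)%N.
  case: ifP hu => [_ _|hD /= hu].
    by rewrite mulr0; exact: hterm.
  rewrite hu mulr1 lerDl; apply: sumr_ge0 => i _; apply: mulr_ge0 => //; exact: cI_ge0.
case: (boolP (k == lift ord0 kst)) => [/eqP hk|hk] /=.
  set xI := enc (None : Item K T).
  apply: (@sum_pos _ _ xI).
  rewrite lt0n; apply/negP => /eqP hx.
  have := feas_demand xI hfe ht; rewrite /ordS encK => hsum.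
  suff : (\sum_(k0 < K.+1) M t k0 xI)%N = 0%N by rewrite hsum.
  apply: big1 => k0 _; case: (unliftP ord0 k0) => [k1 ->|->].
    case: (boolP (k1 == kst)) => [/eqP e|ne]; first by rewrite e -hk; exact: hx.
    apply: (feas_zero' hfe ht); by rewrite /I0I encK (negPf ne).
  apply: hno'; by rewrite /cI eqxx encK.
case: (boolP (Dj m k)) => //= hD.
move: hD; rewrite /Dj negb_and => /orP [|]; first by rewrite lt0n.
rewrite negb_forall => /existsP [i]; rewrite negb_imply => /andP [hty hm].
case: (unliftP ord0 k) => [k1 ek|ek].
  exfalso; move/negP: hm; apply; apply/eqP; apply: hno'.
  move: hty; rewrite /typ /cI eqxx; case: (dec i) => [[s j]|] // /eqP ->.
  by rewrite ek.
by rewrite ek; apply: (sum_pos (i:=i)); rewrite lt0n.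
Qed.

Lemma Dj_zero K T (m : 'I_K.+1 -> 'I_(nI K T) -> nat) j i :
  Dj m j -> typ j i -> m j i = 0%N /\ m ord0 i = 0%N.
Proof.
move=> /andP [/eqP hs /forallP hf] ht; split.
  by apply/eqP; rewrite -leqn0 -hs (bigD1 i) //= leq_addr.
by move: (hf i); rewrite ht /= => /eqP.
Qed.

Lemma B2 K T (kst : 'I_K) bs (M : nat -> 'I_K.+1 -> 'I_(nI K T) -> nat) (s : 'I_T) t j :
  feasible_plan (I0I kst) (mkseq (ordS kst bs) T) M -> (s < t)%N -> (t < T)%N ->
  nth false bs s -> j != lift ord0 kst -> Dj (M s) j -> ~~ Dj (M t) j.
Proof.
move=> hfe hst htT hb hj hD.
set g := enc (Some (s, j) : Item K T).
have htyp : typ j g by rewrite /typ encK.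
have hsT : (s < T)%N by exact: ltn_ord.
have hz : forall u, (u < T)%N -> forall k1, k1 != kst -> j != lift ord0 k1 ->
    M u (lift ord0 k1) g = 0%N.
  move=> u hu k1 h1 h2; apply: (feas_zero' hfe hu).
  by rewrite /I0I encK (negPf h1) (negPf h2).
have [hjs h0s] := Dj_zero hD htyp.
have hdem := feas_demand g hfe hsT.
rewrite /ordS encK (negPf hj) eqxx in hdem.
have hrest : (\sum_(k < K.+1 | k != lift ord0 kst) M s k g)%N = 0%N.
  apply: big1 => k hk.
  case: (unliftP ord0 k) hk => [k1 ->|->] // hk.
  case: (boolP (j == lift ord0 k1)) => [/eqP <-|h2] //.
  apply: hz => //; apply: contra hk => /eqP -> //.
have hks : M s (lift ord0 kst) g = T.
  by move: hdem; rewrite (bigD1 (lift ord0 kst)) //= hrest addn0.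
have hst' := feas_stock kst g hfe htT.
have hsum : (T <= \sum_(u < t) M u (lift ord0 kst) g)%N.
  by rewrite (bigD1 (Ordinal hst)) //= hks leq_addr.
have ht0 : M t (lift ord0 kst) g = 0%N.
  move: hst'; rewrite /I0I encK eqxx /=. move=> hh; by have := leq_trans hh (leq_sub2l T hsum); rewrite subnn leqn0 => /eqP.
apply/negP => hDt.
have [hjt h0t] := Dj_zero hDt htyp.
have hdt := feas_demand g hfe htT.
rewrite /ordS encK (negPf hj) hst hb in hdt.
have : (t != s)%N by rewrite neq_ltn hst orbT.
move/negPf; rewrite eq_sym => e; rewrite e /= in hdt.
suff : (\sum_(k < K.+1) M t k g)%N = 0%N by rewrite hdt.
apply: big1 => k _.
case: (unliftP ord0 k) => [k1 ->|->] //.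
case: (boolP (k1 == kst)) => [/eqP -> //|h1].
case: (boolP (j == lift ord0 k1)) => [/eqP <- //|h2].
exact: hz.
Qed.

Definition Mopt (K T : nat) (kst : 'I_K) (bs : seq bool) (t : nat) (k : 'I_K.+1)
   (i : 'I_(nI K T)) : nat :=
  match dec i with
  | None => if k == lift ord0 kst then 1%N else 0%N
  | Some (s, j) => if j == lift ord0 kst then 0%N else
     if val s == t then (if nth false bs s then (if k == j then T else 0%N)
                         else (if k == lift ord0 kst then T else 0%N))
     else if (val s < t)%N && nth false bs s then (if k == lift ord0 kst then 1%N else 0%N)
     else 0%N
  end.

Lemma sum_delta K (a : 'I_K.+1) (v : nat) :
  (\sum_(k < K.+1) (if k == a then v else 0%N))%N = v.
Proof. by rewrite (bigD1 a) //= eqxx big1 ?addn0 // => k /negPf ->. Qed.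

Lemma lift_eq K (k k' : 'I_K) : (lift ord0 k == lift ord0 k') = (k == k').
Proof. exact: (inj_eq (@lift_inj _ ord0)). Qed.

Lemma Mopt_feas K T (kst : 'I_K) bs :
  feasible_plan (I0I kst) (mkseq (ordS kst bs) T) (@Mopt K T kst bs).
Proof.
move=> t; rewrite size_mkseq => ht; split.
  move=> i; rewrite nth_mkseq // /Mopt /ordS; case: (dec i) => [[s j]|]; last exact: sum_delta.
  case: (j == lift ord0 kst); first by rewrite big1.
  case: (val s == t); first by case: (nth false bs s); exact: sum_delta.
  by case: (_ && _); [exact: sum_delta | rewrite big1].
move=> k i; rewrite /Mopt /I0I; case: (dec i) => [[s j]|]; last first.
  rewrite lift_eq; case: (boolP (k == kst)) => hk //.
  rewrite (eq_bigr (fun _ => 1%N)) // sum_nat_const card_ord; lia.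
case: (boolP (j == lift ord0 kst)) => hj //=.
case: (boolP (val s == t)) => hst.
  rewrite big1 ?subn0; last first.
    move=> u _; move/eqP: hst => hst.
    have -> : (val s == u) = false by apply/negP => /eqP e; move: (ltn_ord u); lia.
    have -> : (val s < u)%N = false by move: (ltn_ord u); lia.
    by [].
  case: (nth false bs s).
    case: (boolP (lift ord0 k == j)) => [/eqP ->|]; last by [].
    by rewrite eqxx orbT.
  by rewrite lift_eq; case: (k == kst).
case: (boolP ((val s < t)%N && nth false bs s)) => [/andP [hlt hb]|] //.
rewrite lift_eq; case: (boolP (k == kst)) => [/eqP ek|] //.
rewrite /= subn_gt0; apply: (leq_ltn_trans _ ht).
rewrite -[X in (_ <= X)%N]card_ord -sum1_card; apply: leq_sum => u _.
rewrite hb ek (eq_sym (lift ord0 kst)) (negPf hj).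
by case: (_ == _); case: (_ < _)%N.
Qed.

Lemma pcq_ge0 (R : realType) K n (f : 'I_K.+1 -> R) (c : 'I_K.+1 -> 'I_n -> R) m :
  (forall k, 0 <= f k) -> (forall k i, 0 <= c k i) -> 0 <= pcq f c m.
Proof.
move=> hf hc; apply: sumr_ge0 => k _; apply: addr_ge0.
  by apply: mulr_ge0 => //; case: ifP.
by apply: sumr_ge0 => i _; apply: mulr_ge0.
Qed.

Lemma mulif_le (R : realType) (x : R) (b : bool) : 0 <= x -> x * (if b then 1 else 0) <= x.
Proof. by case: b; rewrite ?mulr1 ?mulr0. Qed.

Lemma Mopt_cost (R : realType) K T (f : 'I_K.+1 -> R) (kst : 'I_K) bs t :
  (forall k, 0 <= f k) ->
  pcq f (cI (T:=T) (\sum_(k < K.+1) f k)) (Mopt kst bs t)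
    <= if nth false bs t then \sum_(k < K.+1) f k else f (lift ord0 kst).
Proof.
move=> hf0; set Fs := \sum_(k < K.+1) f k.
have hv : forall k i, cI Fs k i * (Mopt (T:=T) kst bs t k i)%:R = 0.
  move=> k i; rewrite /cI /Mopt; case: (boolP (k == ord0)) => [/eqP ->|]; last by rewrite mul0r.
  have hn : (ord0 == lift ord0 kst) = false by apply/negP => /eqP e; move: (@neq_lift _ ord0 kst); rewrite -e eqxx.
  case: (dec i) => [[s j]|]; last by rewrite hn mulr0.
  case: (boolP (j == ord0)) => [|hj0]; first by rewrite mul0r.
  rewrite hn (eq_sym ord0 j) (negPf hj0).
  by repeat case: ifP => _; rewrite /= ?mulr0.
have hv' : forall k, \sum_(i < nI K T) cI Fs k i * (Mopt (T:=T) kst bs t k i)%:R = 0 by move=> k; apply: big1 => i _; exact: hv.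
rewrite /pcq; under eq_bigr => k _ do rewrite hv' addr0.
case: ifP => hb.
  by apply: ler_sum => k _; exact: mulif_le.
rewrite (bigD1 (lift ord0 kst)) //=.
have -> : \sum_(k < K.+1 | k != lift ord0 kst) f k * (if (0 < \sum_(i < nI K T) Mopt (T:=T) kst bs t k i)%N then 1 else 0) = 0.
  apply: big1 => k hk.
  have -> : (\sum_(i < nI K T) Mopt (T:=T) kst bs t k i = 0)%N.
    apply: big1 => i _.
    rewrite /Mopt; case: (dec i) => [[s j]|]; last by rewrite (negPf hk).
    case: (j == lift ord0 kst) => //.
    case: (boolP (val s == t)) => [/eqP e|_].
      by rewrite e hb (negPf hk).
    by case: (_ && _) => //; rewrite (negPf hk).
  by rewrite /= mulr0.
by rewrite addr0; exact: mulif_le.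
Qed.

Lemma OPT_bound (R : realType) K T (f : 'I_K.+1 -> R) (kst : 'I_K) bs :
  (forall k, 0 <= f k) ->
  0 <= OPT f (I0I kst) (cI (T:=T) (\sum_(k < K.+1) f k)) (mkseq (ordS kst bs) T) /\
  OPT f (I0I kst) (cI (T:=T) (\sum_(k < K.+1) f k)) (mkseq (ordS kst bs) T)
    <= \sum_(t < T) (if nth false bs t then \sum_(k < K.+1) f k else f (lift ord0 kst)).
Proof.
move=> hf0; set Fs := \sum_(k < K.+1) f k.
have hFs : 0 <= Fs by apply: sumr_ge0 => k _; exact: hf0.
rewrite /OPT.
set E := [set _ | _ in _].
have hlb : lbound E 0.
  move=> x [M _ <-]; rewrite plan_costE; apply: sumr_ge0 => t _.
  by apply: pcq_ge0 => // k i; exact: cI_ge0.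
have hne : E !=set0.
  by exists (plan_cost f (cI Fs) (size (mkseq (ordS (T:=T) kst bs) T)) (@Mopt K T kst bs));
    exists (@Mopt K T kst bs) => //; exact: Mopt_feas.
split; first exact: lb_le_inf hne hlb.
have hin : E (plan_cost f (cI Fs) (size (mkseq (ordS (T:=T) kst bs) T)) (@Mopt K T kst bs)).
  by exists (@Mopt K T kst bs) => //; exact: Mopt_feas.
apply: (le_trans (ge_inf (ex_intro _ 0 hlb) hin)).
rewrite plan_costE size_mkseq; apply: ler_sum => t _.
exact: Mopt_cost.
Qed.

Lemma count_le1 (R : realType) T (P Q : 'I_T -> bool) :
  (forall s t : 'I_T, (s < t)%N -> P s -> P t -> Q s -> ~~ Q t) ->
  \sum_(t < T | P t) (if Q t then 1 else 0 : R) <= 1.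
Proof.
move=> H; rewrite -big_mkcondr /=.
have -> : \sum_(t < T | P t && Q t) (1:R) = (#|[pred t | P t && Q t]|)%:R.
  by rewrite -sum1_card natr_sum.
rewrite -[X in _ <= X]/(1%:R) ler_nat.
apply/card_le1_eqP => x y; rewrite !inE => /andP [px qx] /andP [py qy].
case: (ltngtP x y) => h; last by apply: val_inj.
  by move: (H _ _ h px py qx); rewrite qy.
by move: (H _ _ h py px qy); rewrite qx.
Qed.

Definition pcw (R : realType) K T (f : 'I_K.+1 -> R) (kst : 'I_K) (d : measure_display)
  (Omega : measurableType d) (pol : Omega -> policy R K) (S : seq ('I_(nI K T) -> nat))
  (w : Omega) : R :=
  pcq f (cI (T:=T) (\sum_(k < K.+1) f k))
    (pol w (nI K T) (I0I kst) (cI (T:=T) (\sum_(k < K.+1) f k)) S).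

Definition isbad (R : realType) K T (f : 'I_K.+1 -> R) (kst : 'I_K) (d : measure_display)
  (Omega : measurableType d) (P : probability Omega R) (pol : Omega -> policy R K) (th : R)
  (bs : seq bool) (t : nat) : bool :=
  `[< (\int[P]_w (pcw f kst pol (mkseq (ordS (T:=T) kst bs) t.+1) w)%:E <= th%:E)%E >].

Fixpoint bl (R : realType) K T (f : 'I_K.+1 -> R) (kst : 'I_K) (d : measure_display)
  (Omega : measurableType d) (P : probability Omega R) (pol : Omega -> policy R K) (th : R)
  (t : nat) : seq bool :=
  match t with
  | 0 => [::]
  | t'.+1 => rcons (bl T f kst P pol th t') (isbad T f kst P pol th (bl T f kst P pol th t') t')
  end.


Lemma size_bl (R : realType) K T f kst d Omega P pol th t :
  size (@bl R K T f kst d Omega P pol th t) = t.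
Proof. by elim: t => //= t IH; rewrite size_rcons IH. Qed.

Lemma nth_bl (R : realType) K T f kst d Omega P pol th s t t' :
  (s < t)%N -> (t <= t')%N ->
  nth false (@bl R K T f kst d Omega P pol th t') s = nth false (@bl R K T f kst d Omega P pol th t) s.
Proof.
move=> hst; elim: t' => [|t' IH]; first by rewrite leqn0 => /eqP ->.
rewrite leq_eqVlt => /orP [/eqP -> //|h].
rewrite /= nth_rcons size_bl (leq_trans hst h) IH //.
Qed.

Lemma nth_bl_last (R : realType) K T f kst d Omega P pol th t :
  nth false (@bl R K T f kst d Omega P pol th t.+1) t
  = isbad T f kst P pol th (@bl R K T f kst d Omega P pol th t) t.
Proof. by rewrite /= nth_rcons size_bl ltnn eqxx. Qed.

Lemma ordS_eq K T (kst : 'I_K) bs bs' u :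
  (forall s, (s < u)%N -> nth false bs s = nth false bs' s) ->
  ordS (T:=T) kst bs u = ordS kst bs' u.
Proof.
move=> H; apply: funext => i; rewrite /ordS.
case: (dec i) => [[s j]|] //.
case: (j == _) => //; case: (_ == u) => //.
case: (boolP (val s < u)%N) => //= h; by rewrite H.
Qed.

Lemma take_S (R : realType) K T f kst d Omega P pol th t :
  (t < T)%N ->
  take t.+1 (mkseq (ordS (T:=T) kst (@bl R K T f kst d Omega P pol th T)) T)
  = mkseq (ordS (T:=T) kst (@bl R K T f kst d Omega P pol th t)) t.+1.
Proof.
move=> ht; rewrite /mkseq -map_take take_iota.
have -> : minn t.+1 T = t.+1 by apply/minn_idPl.
apply/eq_in_map => u; rewrite mem_iota add0n => /andP [_ hu].
apply: ordS_eq => s hs; apply: nth_bl; lia.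
Qed.

Unset Implicit Arguments. Set Strict Implicit.

Lemma final_arith (R : realFieldType) (T nb F fm rho th G : R) :
  0 < th -> 0 <= rho -> 0 <= nb -> 0 <= G -> G = F - fm -> rho * fm = F - 2 * th ->
  nb * th <= G -> G + rho * G * G / th < T * th ->
  rho * (nb * F + (T - nb) * fm) < (T - nb) * (F - th) + (nb * F - G).
Proof.
move=> hth hr hnb hG eG erf hnbt hT.
have h1 : rho * nb * G <= rho * G * G / th.
  have h : nb <= G / th by rewrite ler_pdivlMr.
  have e3 : rho * nb * G = rho * G * nb by ring.
  rewrite e3 -[rho * G * G / th]mulrA.
  by rewrite ler_wpM2l // mulr_ge0.
have e2 : rho * (nb * F + (T - nb) * fm) = rho * nb * G + T * (rho * fm).
  by rewrite eG; ring.
rewrite e2 erf.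
nra.
Qed.

Theorem theorem4 (R : realType) (K : nat) (hK : (0 < K)%N)
  (f : 'I_K.+1 -> R) (hf0 : 0 <= f ord0)
  (hf : forall k : 'I_K, 0 < f (lift ord0 k))
  (d : measure_display) (Omega : measurableType d) (P : probability Omega R)
  (pol : Omega -> policy R K)
  (hvalid : forall (w : Omega) (n : nat) (I0 : 'I_K -> 'I_n -> nat)
     (c : 'I_K.+1 -> 'I_n -> R) (S : seq ('I_n -> nat)),
     (forall k i, 0 <= c k i) -> feasible_plan I0 S (run (pol w) I0 c S))
  (hmeas : forall (n : nat) (I0 : 'I_K -> 'I_n -> nat)
     (c : 'I_K.+1 -> 'I_n -> R) (S : seq ('I_n -> nat)),
     (forall k i, 0 <= c k i) ->
     measurable_fun setT (fun w => plan_cost f c (size S) (run (pol w) I0 c S))) :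
  forall r : R,
    r < (\sum_(k < K.+1) f k) / inf (range (fun k : 'I_K => f (lift ord0 k))) ->
    exists (n : nat) (I0 : 'I_K -> 'I_n -> nat) (c : 'I_K.+1 -> 'I_n -> R)
           (S : seq ('I_n -> nat)),
      (forall k i, 0 <= c k i) /\
      ((r * OPT f I0 c S)%:E < ALG f P pol I0 c S)%E.
Proof.
move=> r hr.
have hfk : forall k, 0 <= f k.
  by move=> k; case: (unliftP ord0 k) => [k1 ->|->] //; exact: ltW (hf k1).
have [kst _ hmin] := @arg_minP _ R 'I_K (Ordinal hK) predT (fun k => f (lift ord0 k)) isT.
set ks := lift ord0 kst.
set Fs := \sum_(k < K.+1) f k.
set fm := f ks.
have hfm : 0 < fm := hf kst.
have hFs : fm <= Fs.
  by rewrite /Fs (bigD1 ks) //= lerDl sumr_ge0.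
have hinf : fm <= inf (range (fun k : 'I_K => f (lift ord0 k))).
  apply: lb_le_inf; first by exists (f (lift ord0 kst)), kst.
  by move=> y [k _ <-]; exact: hmin.
have hr' : r < Fs / fm.
  apply: (lt_le_trans hr); rewrite ler_wpM2l ?(le_trans (ltW hfm) hFs) //.
  by rewrite lef_pV2 ?posrE // (lt_le_trans hfm hinf).
pose rho := if 0 <= r then r else 0.
have hrho0 : 0 <= rho by rewrite /rho; case: ifP.
have hrr : r <= rho by rewrite /rho; case: ifP => // /negbT; rewrite -ltNge => /ltW.
have hrho : rho < Fs / fm.
  rewrite /rho; case: ifP => // _; apply: divr_gt0 => //; exact: lt_le_trans hfm hFs.
have hrf : rho * fm < Fs by rewrite -ltr_pdivlMr.
pose th := (Fs - rho * fm) / 2.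
have hth : 0 < th by rewrite /th divr_gt0 // subr_gt0.
pose G := Fs - fm.
have hG : 0 <= G by rewrite /G subr_ge0.
have [T hT0] : exists T : nat, (G + rho * G * G / th) / th < T%:R.
  by exists (Num.trunc ((G + rho * G * G / th) / th)).+1; exact: truncnS_gt.
have hT : G + rho * G * G / th < T%:R * th by rewrite -ltr_pdivrMr.
pose thr := Fs - th.
pose bs := @bl R K T f kst d Omega P pol thr T.
pose S := mkseq (ordS (T:=T) kst bs) T.
pose c := @cI R K T Fs.
have hFs0 : 0 <= Fs := le_trans (ltW hfm) hFs.
have hc : forall k i, 0 <= c k i by move=> k i; exact: cI_ge0.
exists (nI K T), (I0I kst), c, S; split => //.
pose pc t w := pcq f c (run (pol w) (I0I kst) c S t).
have hPhi : forall m w, (m <= T)%N ->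
    plan_cost f c (size (take m S)) (run (pol w) (I0I kst) c (take m S)) = \sum_(u < m) pc u w.
  move=> m w hm; rewrite plan_costE size_takel ?size_mkseq //.
  by apply: eq_bigr => u _; rewrite /pc /run take_takel.
have hmT : forall t, (t < T)%N -> measurable_fun setT (pc t).
  move=> t ht.
  have -> : pc t = (fun w => plan_cost f c (size (take t.+1 S)) (run (pol w) (I0I kst) c (take t.+1 S))
     - plan_cost f c (size (take t S)) (run (pol w) (I0I kst) c (take t S))).
    apply: funext => w; rewrite !hPhi ?(ltnW ht) // big_ord_recr /=.
    by rewrite [X in X - _]addrC addrK.
  exact: measurable_realfun.measurable_funB (hmeas _ _ _ _ hc) (hmeas _ _ _ _ hc).
have hpc0 : forall t w, 0 <= pc t w by move=> t w; exact: pcq_ge0.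
have eALG : ALG f P pol (I0I kst) c S = \sum_(t < T) (\int[P]_w (pc t w)%:E)%E.
  rewrite /ALG size_mkseq.
  under eq_integral => w _ do rewrite plan_costE -sumEFin.
  rewrite ge0_integral_sum //.
    by move=> t; exact: (measurable_realfun.measurable_EFinP setT (pc t)).2 (hmT t (ltn_ord t)).
  by move=> t w _; rewrite lee_fin; exact: hpc0.
have hbad : forall t : 'I_T,
    nth false bs t = `[< (\int[P]_w (pc t w)%:E <= thr%:E)%E >].
  move=> t; rewrite /bs (@nth_bl R K T f kst d Omega P pol thr t t.+1 T) ?ltn_ord //.
  rewrite nth_bl_last /isbad -(@take_S R K T f kst d Omega P pol thr t) ?ltn_ord //.
pose nb := \sum_(t < T | nth false bs t) (1 : R).
pose ng := \sum_(t < T | ~~ nth false bs t) (1 : R).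
have hnbng : nb + ng = T%:R.
  have <- : \sum_(t < T) (1:R) = T%:R by rewrite sumr_const card_ord.
  by rewrite (bigID (fun t : 'I_T => nth false bs t)) /=.
have hnb0 : 0 <= nb by apply: sumr_ge0.
have hpt : forall w, nb * Fs - G <= \sum_(t < T | nth false bs t) pc t w.
  move=> w.
  have hfe := hvalid w (nI K T) (I0I kst) c S hc.
  set m := run (pol w) (I0I kst) c S in hfe *.
  pose b k (t : 'I_T) := (k != ks) && Dj (m t) k.
  apply: (@le_trans _ _ (\sum_(t < T | nth false bs t) \sum_(k < K.+1) f k * (if b k t then 0 else 1))); last first.
    apply: ler_sum => t _; exact: (B1 hfk hfe (ltn_ord t)).
  have e1 : forall t, \sum_(k < K.+1) f k * (if b k t then 0 else 1)
      = Fs - \sum_(k < K.+1) f k * (if b k t then 1 else 0).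
    move=> t; rewrite /Fs -sumrB; apply: eq_bigr => k _.
    by case: (b k t); rewrite ?mulr0 ?mulr1 ?subr0 ?subrr.
  under eq_bigr => t _ do rewrite e1.
  rewrite sumrB.
  have -> : \sum_(t < T | nth false bs t) Fs = nb * Fs.
    by rewrite /nb mulr_suml; apply: eq_bigr => t _; rewrite mul1r.
  rewrite /G lerD2l lerN2 exchange_big /=.
  have -> : fm = \sum_(k < K.+1) f k * (if k == ks then 1 else 0).
    rewrite (bigD1 ks) //= eqxx mulr1 big1 ?addr0 // => k /negPf ->; by rewrite mulr0.
  rewrite /Fs -sumrB; apply: ler_sum => k _.
  rewrite -mulr_sumr -[X in _ <= X - _]mulr1 -mulrBr; apply: ler_wpM2l; first exact: hfk.
  case: (boolP (k == ks)) => hk.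
    by rewrite subrr big1 // => t _; rewrite /b hk.
  rewrite subr0; apply: count_le1 => s t hst hs ht /andP [_ hq].
  rewrite /b hk /=; exact: (B2 hfe hst (ltn_ord t) hs hk hq).
have hmeasb : measurable_fun setT (fun w => \sum_(t < T | nth false bs t) pc t w).
  have -> : (fun w => \sum_(t < T | nth false bs t) pc t w)
      = (fun w => \sum_(t <- [seq t : 'I_T <- index_enum 'I_T | nth false bs t]) pc (t : 'I_T) w).
    by apply: funext => w; rewrite big_filter.
  apply: measurable_sum => t; exact: hmT (ltn_ord t).
have hbadint : (\sum_(t < T | nth false bs t) \int[P]_w (pc t w)%:E
    = \int[P]_w (\sum_(t < T | nth false bs t) pc t w)%:E)%E.
  under [RHS]eq_integral => w _ do rewrite -sumEFin -big_filter.
  rewrite ge0_integral_sum //.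
  - by rewrite big_filter.
  - by move=> t; exact: (measurable_realfun.measurable_EFinP setT (pc t)).2 (hmT t (ltn_ord t)).
  - by move=> t w _; rewrite lee_fin; exact: hpc0.
pose Lp := if 0 <= nb * Fs - G then nb * Fs - G else 0.
have hLp : nb * Fs - G <= Lp by rewrite /Lp; case: ifP => // /negbT; rewrite -ltNge => /ltW.
have hLp0 : 0 <= Lp by rewrite /Lp; case: ifP.
have hlow : (Lp%:E <= \int[P]_w (\sum_(t < T | nth false bs t) pc t w)%:E)%E.
  have <- : (\int[P]_w (cst Lp%:E w) = Lp%:E)%E.
    rewrite integral_cst // -[X in _ = X]mule1; congr (_ * _)%E; exact: probability_setT.
  apply: ge0_le_integral => //.
  - exact: (measurable_realfun.measurable_EFinP setT _).2 hmeasb.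
  - move=> w _; rewrite lee_fin /Lp; case: ifP => _; first exact: hpt.
    by apply: sumr_ge0 => t _; exact: hpc0.
have hup : (\sum_(t < T | nth false bs t) \int[P]_w (pc t w)%:E <= (nb * thr)%:E)%E.
  apply: (@le_trans _ _ (\sum_(t < T | nth false bs t) thr%:E)%E).
    by apply: lee_sum => t hb; rewrite hbad in hb; exact/asboolP.
  rewrite sumEFin lee_fin /nb mulr_suml.
  by rewrite le_eqVlt; apply/orP; left; apply/eqP/eq_bigr => t _; rewrite mul1r.
have hnbth : nb * th <= G.
  have : Lp <= nb * thr.
    by rewrite -lee_fin (le_trans hlow) // -hbadint.
  move=> h; have := le_trans hLp h; rewrite /thr mulrBr; lra.
have hgood : ((ng * thr)%:E <= \sum_(t < T | ~~ nth false bs t) \int[P]_w (pc t w)%:E)%E.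
  apply: (@le_trans _ _ (\sum_(t < T | ~~ nth false bs t) thr%:E)%E).
    rewrite sumEFin lee_fin /ng mulr_suml.
    by rewrite le_eqVlt; apply/orP; left; apply/eqP/esym/eq_bigr => t _; rewrite mul1r.
  apply: lee_sum => t hb; rewrite hbad in hb; apply/ltW.
  rewrite ltNge; apply/negP => h; move/negP: hb; apply; exact/asboolP.
have hALG : ((Lp + ng * thr)%:E <= ALG f P pol (I0I kst) c S)%E.
  rewrite eALG (bigID (fun t : 'I_T => nth false bs t)) /= EFinD.
  apply: leeD => //; rewrite hbadint; exact: hlow.
have [hO0 hO1] := @OPT_bound R K T f kst bs hfk.
have hUB : \sum_(t < T) (if nth false bs t then \sum_(k < K.+1) f k else f (lift ord0 kst))
    = nb * Fs + ng * fm.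
  rewrite (bigID (fun t : 'I_T => nth false bs t)) /= /nb /ng !mulr_suml.
  congr (_ + _); apply: eq_bigr => t hb; [by rewrite hb mul1r | by rewrite (negPf hb) mul1r].
rewrite hUB in hO1.
apply: (lt_le_trans _ hALG); rewrite lte_fin.
apply: (@le_lt_trans _ _ (rho * (nb * Fs + ng * fm))).
  apply: (@le_trans _ _ (rho * OPT f (I0I kst) c S)).
    exact: ler_wpM2r.
  exact: ler_wpM2l.
have eng : ng = T%:R - nb by rewrite -hnbng; ring.
rewrite eng.
have erf : rho * fm = Fs - 2 * th by rewrite /th; field.
have := @final_arith R T%:R nb Fs fm rho th G hth hrho0 hnb0 hG erefl erf hnbth hT.
move=> hfin; apply: (lt_le_trans hfin).
rewrite /thr -eng addrC lerD2r.
exact: hLp.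
Qed.
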